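(* Let $-1\le a<1$ and let $\mathfrak g=\mathfrak r_{3,a}$, the Lie algebra with basis $\{e_1,e_2,e_3\}$ and nonzero brackets $[e_1,e_2]=e_2$, $[e_1,e_3]=ae_3$, identified with $\mathbb R^3$ via this basis. Then $$U=\left\{\begin{pmatrix}1&0&0\\0&1&0\\0&\lambda&1\end{pmatrix}:\lambda\in\mathbb R\right\}$$ is a set of representatives of $\mathcal{PM}(\mathfrak g)$.
   Context: $\mathcal M(\mathfrak g)$ is the set of inner products on $\mathfrak g\cong\mathbb R^3$, with $\mathrm{GL}_3(\mathbb R)$-action $g.\langle\cdot,\cdot\rangle=\langle g^{-1}\cdot,g^{-1}\cdot\rangle$; $\langle\cdot,\cdot\rangle_0$ makes $\{e_1,e_2,e_3\}$ orthonormal. Two inner products are isometric up to scaling if $\langle\cdot,\cdot\rangle_1=k\langle f\cdot,f\cdot\rangle_2$ for some $k>0$ and Lie algebra automorphism $f$; $[\langle\cdot,\cdot\rangle]$ denotes the equivalence class and $\mathcal{PM}(\mathfrak g)$ the set of classes. A subset $U\subset\mathrm{GL}_3(\mathbb R)$ is a set of representatives of $\mathcal{PM}(\mathfrak g)$ if $\mathcal{PM}(\mathfrak g)=\{[h.\langle\cdot,\cdot\rangle_0]: h\in U\}$. *)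

(* Defs.v *)
From HB Require Import structures.
From mathcomp Require Import all_boot all_order all_algebra.
From mathcomp Require Import reals.
Set Implicit Arguments. Unset Strict Implicit. Unset Printing Implicit Defensive.
Import Order.TTheory GRing.Theory Num.Theory.
Local Open Scope ring_scope.

(* g = R^3, vectors are columns 'cV[R]_3 in the basis (e1,e2,e3) =
   indices 0,1,2. *)

(* Bracket of r_{3,a}: [e1,e2] = e2, [e1,e3] = a e3, [e2,e3] = 0,
   extended bilinearly and antisymmetrically. *)
Definition r3a_bracket {R : comRingType} (a : R) (x y : 'cV[R]_3) : 'cV[R]_3 :=
  \col_(i < 3)
    if (i == 1 :> nat) then x 0%R 0 * y 1%R 0 - x 1%R 0 * y 0%R 0
    else if (i == 2 :> nat) then a * (x 0%R 0 * y 2%:R 0 - x 2%:R 0 * y 0%R 0)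
    else 0.

Definition is_inner_product {R : realType} (ip : 'cV[R]_3 -> 'cV[R]_3 -> R) : Prop :=
  [/\ (forall x y, ip x y = ip y x),
      (forall (c : R) x y z, ip (c *: x + y) z = c * ip x z + ip y z)
    & (forall x, x != 0 -> 0 < ip x x)].

Definition ip0 {R : realType} (x y : 'cV[R]_3) : R := (x^T *m y) 0 0.

Definition gl_act {R : realType} (g : 'M[R]_3) (ip : 'cV[R]_3 -> 'cV[R]_3 -> R)
  : 'cV[R]_3 -> 'cV[R]_3 -> R :=
  fun x y => ip (invmx g *m x) (invmx g *m y).

Definition is_lie_aut {R : realType} (a : R) (f : 'M[R]_3) : Prop :=
  f \in unitmx /\
  forall x y, f *m r3a_bracket a x y = r3a_bracket a (f *m x) (f *m y).

Definition iso_up_to_scaling {R : realType} (a : R)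
  (ip1 ip2 : 'cV[R]_3 -> 'cV[R]_3 -> R) : Prop :=
  exists k : R, exists f : 'M[R]_3,
    0 < k /\ is_lie_aut a f /\
    forall x y, ip1 x y = k * ip2 (f *m x) (f *m y).

Definition U_mat {R : realType} (lam : R) : 'M[R]_3 :=
  \matrix_(i < 3, j < 3)
    if (i == j :> nat) then 1
    else if (i == 2 :> nat) && (j == 1 :> nat) then lam else 0.

(* Main.v *)
Require Import Defs.
From HB Require Import structures.
From mathcomp Require Import all_boot all_order all_algebra.
From mathcomp Require Import reals ring lra.
Import Order.TTheory GRing.Theory Num.Theory.
Local Open Scope ring_scope.
Lemma mulE (R : comRingType) m n (M : 'M[R]_(m,3)) (x : 'M[R]_(3,n)) i j :
  (M *m x) i j = M i 0 * x 0 j + M i 1 * x 1 j + M i 2 * x 2 j.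
Proof. rewrite mxE !big_ord_recr big_ord0 /= add0r.
by congr (M i _ * x _ j + M i _ * x _ j + M i _ * x _ j); apply/val_inj.
Qed.
Lemma ord3_ind (P : 'I_3 -> Prop) : P 0 -> P 1 -> P 2 -> forall i, P i.
Proof. move=> H0 H1 H2 [[|[|[|i]]] Hi] //.
- by have -> : Ordinal Hi = 0 by apply/val_inj.
- by have -> : Ordinal Hi = 1 by apply/val_inj.
- by have -> : Ordinal Hi = 2 by apply/val_inj.
Qed.
Lemma cv3_eq (R : realType) (x y : 'cV[R]_3) :
  x 0 0 = y 0 0 -> x 1 0 = y 1 0 -> x 2 0 = y 2 0 -> x = y.
Proof. move=> h0 h1 h2; apply/matrixP => i j; rewrite (ord1 j); by elim/ord3_ind: i. Qed.
Lemma invU (R : realType) (l : R) : invmx (U_mat l) = U_mat (-l).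
Proof.
have H : U_mat l *m U_mat (-l) = 1%:M.
  apply/matrixP => i j; elim/ord3_ind: i; elim/ord3_ind: j;
  rewrite mulE !mxE /=; ring.
have [Hu _] := mulmx1_unit H.
by rewrite -[RHS](mulKmx Hu) H mulmx1.
Qed.
Lemma ip0E (R : realType) (x y : 'cV[R]_3) :
  ip0 x y = x 0 0 * y 0 0 + x 1 0 * y 1 0 + x 2 0 * y 2 0.
Proof. by rewrite /ip0 mulE !mxE. Qed.
Lemma glE (R : realType) (l : R) (x y : 'cV[R]_3) :
  gl_act (U_mat l) ip0 x y = x 0 0 * y 0 0 + x 1 0 * y 1 0 + (x 2 0 - l * x 1 0) * (y 2 0 - l * y 1 0).
Proof. rewrite /gl_act invU ip0E !mulE !mxE /=; ring. Qed.
Lemma sq_pos {R : realType} (a : R) : a != 0 -> 0 < a * a.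
Proof. by move=> Ha; rewrite -expr2 lt_def sqrf_eq0 Ha sqr_ge0. Qed.
Lemma sq_ge {R : realType} (a : R) : 0 <= a * a.
Proof. by rewrite -expr2 sqr_ge0. Qed.
Lemma part1 (R : realType) (l : R) : is_inner_product (gl_act (U_mat l) ip0).
Proof.
split.
- move=> x y; rewrite !glE; ring.
- move=> c x y z; rewrite !glE !mxE; ring.
- move=> x Hx; rewrite glE.
  have := sq_ge (x 0 0); have := sq_ge (x 1 0); have := sq_ge (x 2 0 - l * x 1 0).
  have [h0|h0] := eqVneq (x 0 0) 0; last first.
    have := sq_pos _ h0; lra.
  have [h1|h1] := eqVneq (x 1 0) 0; last first.
    have := sq_pos _ h1; lra.
  have [h2|h2] := eqVneq (x 2 0) 0; last first.
    rewrite h1 mulr0 subr0; have := sq_pos _ h2; lra.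
  have Ex : x = 0 by apply: cv3_eq; rewrite !mxE.
  by rewrite Ex eqxx in Hx.
Qed.
Definition vec3 {R : realType} (a b c : R) : 'cV[R]_3 :=
  \col_(i < 3) if i == 0 :> nat then a else if i == 1 :> nat then b else c.
Definition evec {R : realType} (i : 'I_3) : 'cV[R]_3 := \col_(j < 3) ((i : nat) == j)%:R.
Definition Gm {R : realType} (ip : 'cV[R]_3 -> 'cV[R]_3 -> R) i j := ip (evec i) (evec j).

Lemma ipE (R : realType) (ip : 'cV[R]_3 -> 'cV[R]_3 -> R) : is_inner_product ip ->
  forall u v, ip u v = u 0 0 * v 0 0 * Gm ip 0 0 + (u 0 0 * v 1 0 + u 1 0 * v 0 0) * Gm ip 0 1
   + (u 0 0 * v 2 0 + u 2 0 * v 0 0) * Gm ip 0 2 + u 1 0 * v 1 0 * Gm ip 1 1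
   + (u 1 0 * v 2 0 + u 2 0 * v 1 0) * Gm ip 1 2 + u 2 0 * v 2 0 * Gm ip 2 2.
Proof.
case=> sym lin _.
have z0 : forall w, ip 0 w = 0.
  move=> w; have := lin 1 0 0 w; rewrite scale1r addr0 mul1r; lra.
have add : forall u v w, ip (u + v) w = ip u w + ip v w.
  by move=> u v w; rewrite -{1}[u]scale1r lin mul1r.
have scl : forall c u w, ip (c *: u) w = c * ip u w.
  by move=> c u w; rewrite -[c *: u]addr0 lin z0 addr0.
have L : forall u w, ip u w = u 0 0 * ip (evec 0) w + u 1 0 * ip (evec 1) w + u 2 0 * ip (evec 2) w.
  move=> u w; rewrite {1}(_ : u = u 0 0 *: evec 0 + u 1 0 *: evec 1 + u 2 0 *: evec 2).
    by rewrite !add !scl.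
  by apply: cv3_eq; rewrite !mxE /=; ring.
move=> u v; rewrite L (sym (evec 0) v) (sym (evec 1) v) (sym (evec 2) v) !(L v) /Gm.
rewrite (sym (evec 1) (evec 0)) (sym (evec 2) (evec 0)) (sym (evec 2) (evec 1)); ring.
Qed.
Lemma solve2 (R : realType) (A B C E F H k p q : R) :
  0 < A -> 0 < C * A - B ^+ 2 -> 0 < k ->
  H = k + (A * F ^+ 2 - 2 * B * E * F + C * E ^+ 2) / (C * A - B ^+ 2) ->
  p ^+ 2 = (C * A - B ^+ 2) / (A * k) -> q ^+ 2 = A / k -> 0 < p -> 0 < q ->
  exists lam x z : R,
   k * q ^+ 2 = A /\ - (k * p * q * lam) = B /\ k * p ^+ 2 * (1 + lam ^+ 2) = C /\
       k * q * z = E /\ k * p * (x - lam * z) = F /\ k * (1 + x ^+ 2 + z ^+ 2) = H.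
Proof.
move=> hA hD hk hH hp hq p0 q0.
have A0 : A != 0 by rewrite gt_eqF.
have D0 : C * A - B ^+ 2 != 0 by rewrite gt_eqF.
have k0 : k != 0 by rewrite gt_eqF.
have pn : p != 0 by rewrite gt_eqF.
have qn : q != 0 by rewrite gt_eqF.
exists (- B / (k * p * q)), (F / (k * p) + (- B / (k * p * q)) * (E / (k * q))), (E / (k * q)).
split; [|split; [|split; [|split; [|split]]]].
- by rewrite hq; field; rewrite ?mulf_neq0 ?qn ?pn ?k0 ?A0 ?D0 ?expf_neq0.
  by field; rewrite ?mulf_neq0 ?qn ?pn ?k0 ?A0 ?D0 ?expf_neq0.
- have -> : k * p ^+ 2 * (1 + (- B / (k * p * q)) ^+ 2) = k * p ^+ 2 + B ^+ 2 / (k * q ^+ 2).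
    by field; rewrite ?mulf_neq0 ?qn ?pn ?k0 ?A0 ?D0 ?expf_neq0.
  by rewrite hp hq; field; rewrite ?mulf_neq0 ?qn ?pn ?k0 ?A0 ?D0 ?expf_neq0.
- by field; rewrite ?mulf_neq0 ?qn ?pn ?k0 ?A0 ?D0 ?expf_neq0.
- by field; rewrite ?mulf_neq0 ?qn ?pn ?k0 ?A0 ?D0 ?expf_neq0.
- have -> : k * (1 + (F / (k * p) + (- B / (k * p * q)) * (E / (k * q))) ^+ 2 + (E / (k * q)) ^+ 2)
     = k + (F * k * q ^+ 2 - B * E) ^+ 2 / (k ^+ 3 * p ^+ 2 * (q ^+ 2) ^+ 2) + E ^+ 2 / (k * q ^+ 2).
    by field; rewrite ?mulf_neq0 ?qn ?pn ?k0 ?A0 ?D0 ?expf_neq0.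
  by rewrite hp hq hH; field; rewrite ?mulf_neq0 ?qn ?pn ?k0 ?A0 ?D0 ?expf_neq0.
Qed.
Definition fmat {R : realType} (x y p q : R) : 'M[R]_3 :=
  \matrix_(i < 3, j < 3)
    if i == 0 :> nat then (if j == 0 :> nat then 1 else 0)
    else if i == 1 :> nat then (if j == 0 :> nat then x else if j == 1 :> nat then p else 0)
    else (if j == 0 :> nat then y else if j == 2 :> nat then q else 0).

Lemma br0 (R : realType) (a : R) x y : r3a_bracket a x y 0 0 = 0.
Proof. by rewrite mxE. Qed.
Lemma br1 (R : realType) (a : R) x y : r3a_bracket a x y 1 0 = x 0 0 * y 1 0 - x 1 0 * y 0 0.
Proof. by rewrite mxE. Qed.
Lemma br2 (R : realType) (a : R) x y : r3a_bracket a x y 2 0 = a * (x 0 0 * y 2 0 - x 2 0 * y 0 0).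
Proof. by rewrite mxE. Qed.
Lemma fmat_aut (R : realType) (a x y p q : R) : p != 0 -> q != 0 -> is_lie_aut a (fmat x y p q).
Proof.
move=> pn qn; split.
  have H : fmat x y p q *m fmat (- x / p) (- y / q) p^-1 q^-1 = 1%:M.
    apply/matrixP => i j; elim/ord3_ind: i; elim/ord3_ind: j;
    rewrite mulE !mxE /=; try (field; rewrite ?pn ?qn //).
  by have [] := mulmx1_unit H.
move=> u v; apply: cv3_eq; rewrite ?br0 ?br1 ?br2 !mulE ?br0 ?br1 ?br2 !mxE /=; ring.
Qed.

Lemma v3E0 {R : realType} (a b c : R) : vec3 a b c 0 0 = a. Proof. by rewrite mxE. Qed.
Lemma v3E1 {R : realType} (a b c : R) : vec3 a b c 1 0 = b. Proof. by rewrite mxE. Qed.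
Lemma v3E2 {R : realType} (a b c : R) : vec3 a b c 2 0 = c. Proof. by rewrite mxE. Qed.
Lemma vnz0 {R : realType} (a b c : R) : a != 0 -> vec3 a b c != 0.
Proof. by move=> h; apply/eqP => E; move: h; rewrite -(v3E0 a b c) E mxE eqxx. Qed.
Lemma vnz1 {R : realType} (a b c : R) : b != 0 -> vec3 a b c != 0.
Proof. by move=> h; apply/eqP => E; move: h; rewrite -(v3E1 a b c) E mxE eqxx. Qed.
Lemma vnz2 {R : realType} (a b c : R) : c != 0 -> vec3 a b c != 0.
Proof. by move=> h; apply/eqP => E; move: h; rewrite -(v3E2 a b c) E mxE eqxx. Qed.

Lemma part2 (R : realType) (a : R) (ip : 'cV[R]_3 -> 'cV[R]_3 -> R) : is_inner_product ip ->
     exists lam : R, iso_up_to_scaling a ip (gl_act (U_mat lam) ip0).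
Proof.
move=> Hip; have Q := @ipE _ _ Hip; case: Hip => _ _ pos.
have hA : 0 < Gm ip 2 2.
  have := pos _ (vnz2 0 0 1 (oner_neq0 R)).
  by rewrite Q !v3E0 !v3E1 !v3E2; lra.
have A0 : Gm ip 2 2 != 0 by rewrite gt_eqF.
have hD : 0 < Gm ip 1 1 * Gm ip 2 2 - Gm ip 1 2 ^+ 2.
  have := pos _ (vnz1 0 (Gm ip 2 2) (- Gm ip 1 2) A0).
  have -> : ip (vec3 0 (Gm ip 2 2) (- Gm ip 1 2)) (vec3 0 (Gm ip 2 2) (- Gm ip 1 2))
    = Gm ip 2 2 * (Gm ip 1 1 * Gm ip 2 2 - Gm ip 1 2 ^+ 2).
    by rewrite Q !v3E0 !v3E1 !v3E2; ring.
  by rewrite pmulr_rgt0.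
have D0 : Gm ip 1 1 * Gm ip 2 2 - Gm ip 1 2 ^+ 2 != 0 by rewrite gt_eqF.
set A := Gm ip 2 2 in hA A0 hD D0 *.
set B := Gm ip 1 2 in hD D0 *.
set C := Gm ip 1 1 in hD D0 *.
set E := Gm ip 0 2.
set F := Gm ip 0 1.
set H := Gm ip 0 0.
set D := C * A - B ^+ 2 in hD D0 *.
set N := A * F ^+ 2 - 2 * B * E * F + C * E ^+ 2.
have hk : 0 < H - N / D.
  have := pos _ (vnz0 1 (- (A * F - B * E) / D) (- (C * E - B * F) / D) (oner_neq0 R)).
  rewrite Q !v3E0 !v3E1 !v3E2 -/A -/B -/C -/E -/F -/H.
  have -> : 1 * 1 * H + (1 * (- (A * F - B * E) / D) + - (A * F - B * E) / D * 1) * F +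
  (1 * (- (C * E - B * F) / D) + - (C * E - B * F) / D * 1) * E +
  - (A * F - B * E) / D * (- (A * F - B * E) / D) * C +
  (- (A * F - B * E) / D * (- (C * E - B * F) / D) +
   - (C * E - B * F) / D * (- (A * F - B * E) / D)) * B +
  - (C * E - B * F) / D * (- (C * E - B * F) / D) * A = H - N / D.
    rewrite /N /D; field; by rewrite -/D.
  done.
have [k [kpos kdef]] : exists k, 0 < k /\ H = k + N / D.
  by exists (H - N / D); split => //; ring.
have [p [p0 hp]] : exists p, 0 < p /\ p ^+ 2 = D / (A * k).
  have h : 0 < D / (A * k) by rewrite divr_gt0 // mulr_gt0.
  by exists (Num.sqrt (D / (A * k))); rewrite sqrtr_gt0 sqr_sqrtr ?h // ltW.
have [q [q0 hq]] : exists q, 0 < q /\ q ^+ 2 = A / k.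
  have h : 0 < A / k by rewrite divr_gt0.
  by exists (Num.sqrt (A / k)); rewrite sqrtr_gt0 sqr_sqrtr ?h // ltW.
have [lam [x [z [e1 [e2 [e3 [e4 [e5 e6]]]]]]]] :=
  @solve2 R A B C E F H k p q hA hD kpos kdef hp hq p0 q0.
exists lam, k, (fmat x (z + lam * x) p q); split => //; split.
  by apply: fmat_aut; rewrite gt_eqF.
move=> u v; rewrite glE !mulE !mxE /= Q -/A -/B -/C -/E -/F -/H.
rewrite -e1 -e2 -e3 -e4 -e5 -e6; ring.
Qed.

Theorem proposition3p9 (R : realType) (a : R) (ha1 : -1 <= a) (ha2 : a < 1) :
  (forall lam : R, is_inner_product (gl_act (U_mat lam) ip0)) /\
  (forall ip : 'cV[R]_3 -> 'cV[R]_3 -> R, is_inner_product ip ->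
     exists lam : R, iso_up_to_scaling a ip (gl_act (U_mat lam) ip0)).
Proof. split; [exact: part1 | exact: part2]. Qed.
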